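(* For the $n\times n$ identity matrix $I_n$ (with $n\ge 2$), $\mathsf{m}^{rd}(+\infty,I_n)\le\frac{n}{3n-4}$.
   Context: For $A\in\{0,1\}^{N\times n}$ and $m\ge0$, unit vectors $U_1,\dots,U_N,V_1,\dots,V_n\in\mathbb{R}^d$ form a margin-$m$, relative-bias-$0$ embedding of $A$ if $\langle U_j,V_i\rangle\ge m$ whenever $A_{ji}=1$ and $\langle U_j,V_i\rangle\le -m$ whenever $A_{ji}=0$. $\mathsf{m}^{rd}(d,A)$ is the supremum of such $m$ in dimension $d$, and $\mathsf{m}^{rd}(+\infty,A)=\sup_d\mathsf{m}^{rd}(d,A)$. *)

(* Defs.v *)
From HB Require Import structures.
From mathcomp Require Import all_boot all_order all_algebra.
From mathcomp Require Import all_classical all_reals.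
From mathcomp Require Import ereal.
Set Implicit Arguments. Unset Strict Implicit. Unset Printing Implicit Defensive.
Import Order.TTheory GRing.Theory Num.Theory.
Local Open Scope ring_scope.
Local Open Scope classical_set_scope.

Definition dotv (R : realType) (d : nat) (u v : 'rV[R]_d) : R :=
  \sum_(k < d) u 0 k * v 0 k.

Definition unitv (R : realType) (d : nat) (u : 'rV[R]_d) : Prop :=
  dotv u u = 1.

(* U_1..U_N, V_1..V_n form a margin-m, relative-bias-0 embedding of A
   (A is a 0/1 matrix, encoded with boolean entries: true = 1, false = 0). *)
Definition rd_embedding (R : realType) (d N n : nat) (A : 'M[bool]_(N, n))
    (m : R) (U : 'I_N -> 'rV[R]_d) (V : 'I_n -> 'rV[R]_d) : Prop :=
  (forall j, unitv (U j)) /\ (forall i, unitv (V i)) /\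
  (forall j i, if A j i then m <= dotv (U j) (V i)
               else dotv (U j) (V i) <= - m).

Definition mrd (R : realType) (d N n : nat) (A : 'M[bool]_(N, n)) : \bar R :=
  ereal_sup [set (m%:E) | m in
    [set m : R | 0 <= m /\ exists U V, @rd_embedding R d N n A m U V]].

(* m^rd(+oo, A) = sup_d m^rd(d, A). *)
Definition mrd_inf (R : realType) (N n : nat) (A : 'M[bool]_(N, n)) : \bar R :=
  ereal_sup (range (fun d : nat => @mrd R d N n A)).

Definition id01 (n : nat) : 'M[bool]_(n, n) := \matrix_(j, i) (j == i).

(* Main.v *)
Require Import Defs.
From HB Require Import structures.
From mathcomp Require Import all_boot all_order all_algebra.
From mathcomp Require Import all_classical all_reals.
From mathcomp Require Import ereal.
From mathcomp Require Import ring lra zify.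
Import Order.TTheory GRing.Theory Num.Theory.
Local Open Scope ring_scope.

Lemma cs_sum (R : realType) (n : nat) (w : 'I_n -> R) :
  (\sum_j w j) ^+ 2 <= n%:R * \sum_j (w j) ^+ 2.
Proof.
have h0 : 0 <= \sum_j \sum_k (w j - w k) ^+ 2.
  by apply: sumr_ge0 => j _; apply: sumr_ge0 => k _; exact: sqr_ge0.
set S := \sum_j w j. set A := \sum_j (w j) ^+ 2.
have e1 j : \sum_k (w j - w k) ^+ 2 = n%:R * w j ^+ 2 + A - 2 * w j * S.
  transitivity (\sum_k (w j ^+ 2 + w k ^+ 2 - 2 * w j * w k)).
    by apply: eq_bigr => k _; ring.
  by rewrite sumrB big_split /= sumr_const card_ord -mulr_sumr -[_ *+ n]mulr_natl.
have e2 : \sum_j \sum_k (w j - w k) ^+ 2 = 2 * (n%:R * A) - 2 * S ^+ 2.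
  under eq_bigr => j _ do rewrite e1.
  rewrite sumrB big_split /= sumr_const card_ord -mulr_sumr -mulr_suml.
  rewrite -/A -/S -[_ *+ n]mulr_natl -mulr_sumr -/S -[A *+ n]mulr_natl; ring.
lra.
Qed.

Lemma key (R : realType) (n d : nat) (U V : 'I_n -> 'rV[R]_d) (m : R)
  (hn : (2 <= n)%N) (H : rd_embedding (id01 n) m U V) :
  m * (n%:R * (6 * n%:R - 8)) <= 2 * n%:R ^+ 2.
Proof.
case: H => hU [hV hA].
have hA' j i : if j == i then m <= dotv (U j) (V i) else dotv (U j) (V i) <= - m.
  by have := hA j i; rewrite /id01 mxE.
have hdiag j : m <= dotv (U j) (V j) by have := hA' j j; rewrite eqxx.
have hoff j i : i != j -> dotv (U j) (V i) <= - m.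
  by move=> hij; have := hA' j i; rewrite eq_sym (negbTE hij).
have hUV j : \sum_k (U j 0 k - V j 0 k) ^+ 2 = 2 - 2 * dotv (U j) (V j).
  transitivity (\sum_k (U j 0 k * U j 0 k + V j 0 k * V j 0 k - 2 * (U j 0 k * V j 0 k))).
    by apply: eq_bigr => k _; ring.
  rewrite sumrB big_split /= -mulr_sumr.
  have := hU j; have := hV j; rewrite /unitv /dotv => -> ->.
  by [].
have hrow j : \sum_i dotv (U j) (V i) <= dotv (U j) (V j) - (n.-1)%:R * m.
  rewrite (bigD1 j) //=.
  have : \sum_(i | i != j) dotv (U j) (V i) <= \sum_(i | i != j) (- m).
    by apply: ler_sum => i hi; exact: hoff.
  rewrite sumr_const cardC1 card_ord mulNrn -mulr_natl. lra.
have hP : \sum_j \sum_i dotv (U j) (V i) =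
   \sum_k (\sum_j U j 0 k) * (\sum_i V i 0 k).
  rewrite /dotv.
  under eq_bigr => j _ do rewrite exchange_big.
  rewrite exchange_big /=; apply: eq_bigr => k _; rewrite mulr_suml.
  by apply: eq_bigr => j _; rewrite mulr_sumr.
have hQ : 0 <= n%:R * \sum_j \sum_k (U j 0 k - V j 0 k) ^+ 2 +
   4 * \sum_k (\sum_j U j 0 k) * (\sum_i V i 0 k).
  rewrite (exchange_big) mulr_sumr mulr_sumr -big_split; apply: sumr_ge0 => k _ /=.
  have := @cs_sum R n (fun j => U j 0 k - V j 0 k). rewrite sumrB.
  set s := \sum_j U j 0 k. set t := \sum_j V j 0 k.
  have := sqr_ge0 (s + t). nra.
rewrite -hP in hQ.
rewrite (eq_bigr _ (fun j _ => hUV j)) in hQ.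
rewrite sumrB sumr_const card_ord -mulr_sumr in hQ.
have hS : \sum_j \sum_i dotv (U j) (V i) <=
   \sum_j dotv (U j) (V j) - n%:R * ((n.-1)%:R * m).
  apply: le_trans (ler_sum _ (fun j _ => hrow j)) _.
  by rewrite sumrB sumr_const card_ord -[_ *+ n]mulr_natl.
have hD : \sum_(j < n) m <= \sum_j dotv (U j) (V j).
  by apply: ler_sum => j _; exact: hdiag.
rewrite sumr_const card_ord -[_ *+ n]mulr_natl in hD.
have hn' : (2 : R) <= n%:R by rewrite ler_nat.
have hn1 : (n.-1)%:R = n%:R - 1 :> R.
  have e : n = (n.-1).+1 by lia.
  by rewrite [in RHS]e -natr1 addrK.
rewrite hn1 in hS.
set D := \sum_j dotv (U j) (V j) in hQ hS hD.
set P := \sum_j \sum_i dotv (U j) (V i) in hQ hS.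
have hprod : 0 <= (2 * n%:R - 4) * (D - n%:R * m).
  apply: mulr_ge0; lra.
rewrite -mulr_natl in hQ.
nra.
Qed.

Theorem corollaryD1 (R : realType) (n : nat) (hn : (2 <= n)%N) :
  (@mrd_inf R n n (id01 n) <= ((n%:R / (3 * n%:R - 4) : R)%:E))%E.
Proof.
apply: ub_ereal_sup => _ [dd _ <-].
apply: ub_ereal_sup => _ [m [hm0 [U [V H]]] <-].
rewrite lee_fin.
have := @key R n dd U V m hn H.
have hn' : (2 : R) <= n%:R by rewrite ler_nat.
have hpos : (0 : R) < 3 * n%:R - 4 by lra.
rewrite ler_pdivlMr //.
move=> h. nra.
Qed.
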